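(* Let $X_1,X_2,\dots$ be i.i.d. $\mathbb{Z}$-valued random variables and $S_n=\sum_{j=1}^nX_j$. For every $N\in\mathbb{N}\setminus\{1\}$, $$\frac{1}{1+\sum_{i=1}^{N-1}P\{S_i\in[i]_N\}}\le\mathbb{P}^{(N)}_{\mathcal{R}}\Big(\bigcup_{n=1}^N\{\mathcal{R}^{(N)}_n=(n\bmod N)\}\Big)\le\frac{2}{1+\sum_{i=1}^{N-1}P\{S_i\in[i]_N\}}.$$
   Context: $X_j$ live on $(\Omega,\mathcal{F},P)$. $[y]_N=\{y+kN:k\in\mathbb{Z}\}$. For $N\in\mathbb{N}$, $X^{(N)}_0$ is uniform on $\{0,\dots,N-1\}$ under $(\Omega_N,\mathcal{F}_N,\mu_N)$; $(b\bmod N)$ is the remainder of $b\in\mathbb{Z}$ divided by $N$; $\mathcal{R}^{(N)}_n=(X^{(N)}_0+S_n\bmod N)$; $\mathbb{P}^{(N)}_{\mathcal{R}}=\mu_N\times P$. *)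

(* Defs.v *)
From HB Require Import structures.
From mathcomp Require Import all_boot all_order all_algebra.
From mathcomp Require Import all_classical all_reals all_analysis.
Set Implicit Arguments. Unset Strict Implicit. Unset Printing Implicit Defensive.
Import Order.TTheory GRing.Theory Num.Theory.
Local Open Scope classical_set_scope.
Local Open Scope ring_scope.

(* X : nat -> T -> int, where X j stands for the paper's X_{j+1}. *)

Definition int_rvs d (T : measurableType d) (X : nat -> T -> int) : Prop :=
  forall j (k : int), measurable [set w | X j w = k].

Definition mutually_independent d (T : measurableType d) (R : realType)
  (P : probability T R) (X : nat -> T -> int) : Prop :=
  forall (I : seq nat) (k : nat -> int), uniq I ->
    P (\bigcap_(i in [set` I]) [set w | X i w = k i]) =
    (\prod_(i <- I) P [set w | X i w = k i])%E.

Definition identically_distributed d (T : measurableType d) (R : realType)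
  (P : probability T R) (X : nat -> T -> int) : Prop :=
  forall j (k : int), P [set w | X j w = k] = P [set w | X 0%N w = k].

Definition partial_sum d (T : measurableType d) (X : nat -> T -> int)
  (n : nat) (w : T) : int := \sum_(j < n) X j w.

Definition p_class d (T : measurableType d) (R : realType)
  (P : probability T R) (X : nat -> T -> int) (N i : nat) : R :=
  fine (P [set w | (N%:Z %| partial_sum X i w - i%:Z)%Z]).

(* The event  U_{n=1}^N {R_n = (n mod N)}  sliced at X_0^{(N)} = x,
   with R_n = (x + S_n mod N). *)
Definition hit_event d (T : measurableType d) (X : nat -> T -> int)
  (N x : nat) : set T :=
  [set w | exists n : nat, (1 <= n <= N)%N /\
     ((x%:Z + partial_sum X n w) %% N%:Z)%Z = ((n %% N)%N)%:Z].

(* P^{(N)}_R = mu_N x P of that event, mu_N uniform on {0,...,N-1}: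
   (mu_N x P)(A) = sum_x mu_N{x} P(A_x) = (1/N) sum_{x<N} P(A_x). *)
Definition PR_hit d (T : measurableType d) (R : realType)
  (P : probability T R) (X : nat -> T -> int) (N : nat) : R :=
  (N%:R)^-1 * \sum_(x < N) fine (P (hit_event X N x)).

(* Main.v *)
Require Import Defs.
From HB Require Import structures.
From mathcomp Require Import all_boot all_order all_algebra.
From mathcomp Require Import all_classical all_reals all_analysis.
From mathcomp Require Import zify ring lra.
Import Order.TTheory GRing.Theory Num.Theory.
Set Implicit Arguments. Unset Strict Implicit. Unset Printing Implicit Defensive.
Local Open Scope ring_scope.

Section Pure.
Variable R : realFieldType.
Variable N : nat.
Variable q : nat -> R.
Hypothesis q_ge0 : forall r, 0 <= q r.
Hypothesis q_sum : \sum_(r < N) q r = 1.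

Fixpoint LL (n : nat) (g : seq nat -> R) : R :=
  if n is n'.+1 then \sum_(r < N) q r * LL n' (fun s => g (nat_of_ord r :: s)) else g [::].

Lemma L_ext n f g : (forall s, f s = g s) -> LL n f = LL n g.
Proof.
elim: n f g => [|n IH] f g Hsum /=; first exact: Hsum.
by apply: eq_bigr => r _; rewrite (IH _ (fun s => g (nat_of_ord r :: s))).
Qed.

Lemma L_add n f g : LL n (fun s => f s + g s) = LL n f + LL n g.
Proof.
elim: n f g => [|n IH] f g //=.
by rewrite -big_split; apply: eq_bigr => r _ /=; rewrite IH mulrDr.
Qed.

Lemma L_scale n cc f : LL n (fun s => cc * f s) = cc * LL n f.
Proof.
elim: n f => [|n IH] f //=.
rewrite mulr_sumr; apply: eq_bigr => r _ /=; rewrite IH.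
by rewrite mulrCA.
Qed.

Lemma L_const n cc : LL n (fun _ => cc) = cc.
Proof.
elim: n => [|n IH] //=.
by rewrite -mulr_suml q_sum mul1r.
Qed.

Lemma L_sum n (I : Type) (r : seq I) (P : pred I) (F : I -> seq nat -> R) :
  LL n (fun s => \sum_(i <- r | P i) F i s) = \sum_(i <- r | P i) LL n (F i).
Proof.
elim: r => [|i r IH].
  by rewrite big_nil (L_ext n (g := fun _ => 0)) ?L_const // => s; rewrite big_nil.
rewrite big_cons; case Pi: (P i).
  by rewrite -IH -L_add; apply: L_ext => s; rewrite big_cons Pi.
by rewrite -IH; apply: L_ext => s; rewrite big_cons Pi.
Qed.

Lemma L_mono n f g : (forall s, f s <= g s) -> LL n f <= LL n g.
Proof.
elim: n f g => [|n IH] f g Hsum /=; first exact: Hsum.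
by apply: ler_sum => r _; apply: ler_wpM2l => //; apply: IH.
Qed.

Lemma L_ge0 n f : (forall s, 0 <= f s) -> 0 <= LL n f.
Proof. by move=> Hsum; rewrite -(L_const n 0); apply: L_mono. Qed.

Lemma L_split k j a b :
  LL (k + j) (fun s => a (take k s) * b (drop k s)) = LL k a * LL j b.
Proof.
elim: k a => [|k IH] a /=.
  by rewrite add0n (L_ext _ (g := fun s => a [::] * b s)) ?L_scale // => s; rewrite take0 drop0.
rewrite /= mulr_suml; apply: eq_bigr => r _.
by rewrite -mulrA -(IH (fun t => a (nat_of_ord r :: t))).
Qed.

Lemma L_take n k a : (k <= n)%N -> LL n (fun s => a (take k s)) = LL k a.
Proof.
move=> kn; rewrite -(subnKC kn).
have := L_split k (n - k) a (fun _ => 1); rewrite L_const mulr1 => <-.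
by apply: L_ext => s; rewrite mulr1.
Qed.


Definition hb (x n : nat) (s : seq nat) : bool :=
  (N%:Z %| x%:Z + (sumn (take n s))%:Z - n%:Z)%Z.
Definition Fb (x k : nat) (s : seq nat) : bool :=
  hb x k s && all (fun j => ~~ hb x j s) (iota 1 k.-1).
Definition hitb (x : nat) (s : seq nat) : bool := has (fun n => hb x n s) (iota 1 N).

Lemma hb_take x j k s : (j <= k)%N -> hb x j (take k s) = hb x j s.
Proof. by move=> jk; rewrite /hb take_takel. Qed.

Lemma Fb_take x k s : Fb x k (take k s) = Fb x k s.
Proof.
rewrite /Fb hb_take //; congr andb; apply: eq_in_all => j.
by rewrite mem_iota => /andP[_ lt]; rewrite hb_take //; lia.
Qed.

Lemma hb_split x k n s : hb x k s -> (k <= n)%N ->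
  hb x n s = hb 0 (n - k) (drop k s).
Proof.
rewrite /hb => Hsum kn.
have -> : take n s = take k s ++ take (n - k) (drop k s) by rewrite -takeD subnKC.
rewrite sumn_cat.
set a := sumn (take k s); set b := sumn (take (n - k) (drop k s)).
have -> : x%:Z + (a + b)%N%:Z - n%:Z = (x%:Z + a%:Z - k%:Z) + (0%N%:Z + b%:Z - (n - k)%N%:Z).
  rewrite PoszD -(subzn kn); ring.
by rewrite (rpredDl _ (Hsum : _ \in dvdz N)).

Qed.

Lemma Fb_hb x k s : Fb x k s -> hb x k s.
Proof. by case/andP. Qed.

Lemma Fb_uniq x a b s : (1 <= a)%N -> (1 <= b)%N -> Fb x a s -> Fb x b s -> a = b.
Proof.
wlog ab : a b / (a <= b)%N.
  move=> W a1 b1 Fa Fb'; case: (leqP a b) => ab; first exact: W.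
  by apply/esym/W => //; apply: ltnW.
move=> a1 b1 Fa /andP[_ /allP Hb].
have [//|lt] : a = b \/ (a < b)%N by lia.
have : a \in iota 1 b.-1 by rewrite mem_iota; apply/andP; split => //; lia.
by move/Hb; rewrite (Fb_hb Fa).
Qed.

Lemma first_hit x n s : (1 <= n)%N -> hb x n s -> exists2 k, (1 <= k <= n)%N & Fb x k s.
Proof.
move=> n1 hn.
have exP : exists j, (1 <= j)%N && hb x j s by exists n; rewrite n1.
case: (ex_minnP exP) => k /andP[k1 hk] Hmin.
exists k; first by rewrite k1 /=; apply: Hmin; rewrite n1.
rewrite /Fb hk /=; apply/allP => j; rewrite mem_iota => /andP[j1 jk].
apply/negP => hj.
have := Hmin j; rewrite j1 hj => /(_ isT); lia.
Qed.

Lemma sum_indic (r : seq nat) (f : pred nat) : uniq r ->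
  {in r &, forall a b, f a -> f b -> a = b} ->
  \sum_(k <- r) (f k)%:R = (has f r)%:R :> R.
Proof.
elim: r => [|a r IH] /=; first by rewrite big_nil.
move=> /andP[ar ur] Hsum; rewrite big_cons IH //; last first.
  by move=> u v ur' vr'; apply: Hsum; rewrite inE ?ur' ?vr' orbT.
case fa: (f a) => /=.
  case hr: (has f r); last by rewrite addr0.
  move/hasP: hr => [b br fb].
  have eab : a = b by apply: Hsum; rewrite // inE ?eqxx ?br ?orbT.
  by move: ar; rewrite eab br.
by rewrite add0r.
Qed.

Hypothesis hN : (1 < N)%N.

Lemma sum_x_hb n s : \sum_(x < N) (hb x n s)%:R = 1 :> R.
Proof.
set cc := (sumn (take n s))%:Z - n%:Z.
have hbE x : (x < N)%N -> hb x n s = (x%:Z == (- cc) %% N%:Z)%Z.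
  move=> xN; rewrite /hb -addrA.
  have -> : x%:Z + cc = x%:Z - (- cc) by rewrite opprK.
  rewrite -eqz_mod_dvd modz_small //; apply/andP; split => //; lia.
have c0 : 0 <= ((- cc) %% N%:Z)%Z by rewrite modz_ge0 //; lia.
have cN : ((- cc) %% N%:Z)%Z < N%:Z by rewrite ltz_pmod //; lia.
rewrite -(big_mkord xpredT (fun x => (hb x n s)%:R)) sum_indic ?iota_uniq //.
  have -> : has (fun x => hb x n s) (index_iota 0 N) by
    apply/hasP; exists (absz ((- cc) %% N%:Z)%Z);
    [rewrite mem_index_iota; lia | rewrite hbE; lia].
  by [].
move=> a b; rewrite !mem_index_iota => aN bN.
rewrite hbE ?hbE //; lia.
Qed.


Definition MM := (N + N)%N.
Definition pp j := LL j (fun s => (hb 0 j s)%:R).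
Definition GG x k := LL MM (fun s => (Fb x k s)%:R).

Lemma LFh x k n : (1 <= k)%N -> (k <= n)%N -> (n <= MM)%N ->
  LL MM (fun s => (Fb x k s && hb x n s)%:R) = GG x k * pp (n - k).
Proof.
move=> k1 kn nM.
have kM : (k <= MM)%N by apply: leq_trans nM.
have E s : (Fb x k s && hb x n s)%:R =
    (Fb x k (take k s))%:R * (hb 0 (n - k) (take (n - k) (drop k s)))%:R :> R.
  rewrite Fb_take hb_take //; case F: (Fb x k s) => /=.
    by rewrite (hb_split (Fb_hb F) kn) mul1r.
  by rewrite mul0r.
have E2 s : (Fb x k s)%:R = (Fb x k (take k s))%:R :> R by rewrite Fb_take.
rewrite (L_ext _ E) /GG (L_ext _ E2).
rewrite (L_take (fun t => (Fb x k t)%:R) kM).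
rewrite -(subnKC kM) (L_split k (MM - k) (fun t => (Fb x k t)%:R) (fun t => (hb 0 (n - k) (take (n - k) t))%:R)); congr (_ * _).
by rewrite (L_take (fun t => (hb 0 (n - k) t)%:R)) //; apply: leq_sub2r.
Qed.

Lemma sum_F_hb x n s :
  \sum_(1 <= k < N.+1) (((k <= n)%N && Fb x k s && hb x n s))%:R
  = (((1 <= n <= N)%N || ~~ (1 <= n <= N)%N) && has (fun k => (k <= n)%N && Fb x k s && hb x n s) (index_iota 1 N.+1))%:R :> R.
Proof.
rewrite orbN /= sum_indic ?iota_uniq //.
move=> a b; rewrite !mem_index_iota => /andP[a1 _] /andP[b1 _].
move=> /andP[/andP[_ Fa] _] /andP[/andP[_ Fb'] _]; exact: Fb_uniq Fa Fb'.
Qed.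

Lemma has_F_hb_le x n s :
  has (fun k => (k <= n)%N && Fb x k s && hb x n s) (index_iota 1 N.+1) -> hb x n s.
Proof. by case/hasP => k _ /andP[]. Qed.

Lemma has_F_hb_eq x n s : (1 <= n <= N)%N -> hb x n s ->
  has (fun k => (k <= n)%N && Fb x k s && hb x n s) (index_iota 1 N.+1).
Proof.
move=> /andP[n1 nN] hn; have [k /andP[k1 kn] Fk] := first_hit n1 hn.
apply/hasP; exists k; first by rewrite mem_index_iota; lia.
by rewrite kn Fk hn.
Qed.

Lemma hit_sum x s : (hitb x s)%:R = \sum_(1 <= k < N.+1) (Fb x k s)%:R :> R.
Proof.
rewrite sum_indic ?iota_uniq //; last first.
  move=> a b; rewrite !mem_index_iota => /andP[a1 _] /andP[b1 _]; exact: Fb_uniq.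
suff -> : hitb x s = has (fun k => Fb x k s) (index_iota 1 N.+1) by [].
apply/idP/idP.
  case/hasP => n; rewrite mem_iota => /andP[n1 nN] hn.
  have [k /andP[k1 kn] Fk] := first_hit n1 hn.
  by apply/hasP; exists k => //; rewrite mem_index_iota; lia.
case/hasP => k; rewrite mem_index_iota => /andP[k1 kN] Fk.
by apply/hasP; exists k; [rewrite mem_iota; lia | exact: Fb_hb].
Qed.

Definition cc k n := if (k <= n)%N then pp (n - k) else 0.

Lemma p_ge0 j : 0 <= pp j.
Proof. by apply: L_ge0 => s; rewrite ler0n. Qed.

Lemma p0 : pp 0 = 1.
Proof. by rewrite /pp /= /hb /= subr0 addr0 dvdz0. Qed.

Lemma sum_c k B : (1 <= k <= B.+1)%N ->
  \sum_(1 <= n < B.+1) cc k n = \sum_(0 <= j < B.+1 - k) pp j.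
Proof.
move=> /andP[k1 kB].
rewrite (@big_cat_nat _ _ _ k 1 B.+1) // big1_seq; last first.
  by move=> n /andP[_]; rewrite mem_index_iota /cc => /andP[_ nk]; rewrite leqNgt nk.
rewrite /= add0r -{1}(add0n k) big_addn; apply: eq_bigr => i _.
by rewrite /cc leq_addl addnK.
Qed.

Lemma psum_mono m1 m2 : (m1 <= m2)%N ->
  \sum_(0 <= j < m1) pp j <= \sum_(0 <= j < m2) pp j.
Proof.
move=> m12; rewrite (@big_cat_nat _ _ _ m1 0 m2) // lerDl.
by apply: sumr_ge0 => i _; apply: p_ge0.
Qed.

Definition Dd := 1 + \sum_(1 <= i < N) pp i.

Lemma D_eq : Dd = \sum_(0 <= j < N) pp j.
Proof. by rewrite /Dd (big_ltn (ltnW hN)) p0. Qed.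

Definition Tsum x n := \sum_(1 <= k < N.+1) GG x k * cc k n.

Lemma LT x n : (n <= MM)%N ->
  LL MM (fun s => \sum_(1 <= k < N.+1) (((k <= n)%N && Fb x k s && hb x n s))%:R) = Tsum x n.
Proof.
move=> nM; rewrite L_sum /Tsum big_nat_cond [in RHS]big_nat_cond; apply: eq_bigr => k /andP[/andP[k1 _] _].
rewrite /cc; case: ifP => kn.
  rewrite (L_ext _ (g := fun s => (Fb x k s && hb x n s)%:R)); first exact: LFh.
  by [].
by rewrite mulr0 (L_ext _ (g := fun _ => 0)) ?L_const.
Qed.

Lemma sum_hx n : \sum_(x < N) LL MM (fun s => (hb x n s)%:R) = 1.
Proof.
by rewrite -L_sum (L_ext _ (g := fun _ => 1)) ?L_const // => s; rewrite sum_x_hb.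
Qed.

Definition Hsum := \sum_(x < N) LL MM (fun s => (hitb x s)%:R).

Lemma HG : Hsum = \sum_(x < N) \sum_(1 <= k < N.+1) GG x k.
Proof.
apply: eq_bigr => x _; rewrite (L_ext _ (hit_sum x)) L_sum //.
Qed.

Lemma chain B : \sum_(1 <= n < B.+1) \sum_(x < N) Tsum x n =
  \sum_(x < N) \sum_(1 <= k < N.+1) GG x k * \sum_(1 <= n < B.+1) cc k n.
Proof.
rewrite exchange_big /=; apply: eq_bigr => x _.
rewrite /Tsum exchange_big /=; apply: eq_bigr => k _.
by rewrite mulr_sumr.
Qed.

Lemma G_ge0 x k : 0 <= GG x k.
Proof. by apply: L_ge0 => s; rewrite ler0n. Qed.

Lemma pure_main : N%:R <= Dd * Hsum /\ Dd * Hsum <= MM%:R.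
Proof.
split.
- have -> : N%:R = \sum_(1 <= n < N.+1) \sum_(x < N) LL MM (fun s => (hb x n s)%:R) :> R.
    by rewrite (eq_bigr (fun _ => 1)) ?sumr_const_nat ?subn1 // => n _; rewrite sum_hx.
  apply: (@le_trans _ _ (\sum_(1 <= n < N.+1) \sum_(x < N) Tsum x n)).
    rewrite big_nat_cond [in X in _ <= X]big_nat_cond; apply: ler_sum => n /andP[nr _].
    apply: ler_sum => x _; rewrite -LT; last by rewrite /MM; lia.
    apply: L_mono => s; rewrite sum_F_hb orbN /=.
    have nN : (1 <= n <= N)%N by lia.
    case hh: (has _ _); first by rewrite ler_nat leq_b1.
    suff -> : hb x n s = false by [].
    by apply/negbTE/negP => hn; rewrite (has_F_hb_eq nN hn) in hh.
  rewrite chain HG mulr_sumr; apply: ler_sum => x _; rewrite mulr_sumr.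
  rewrite big_nat_cond [in X in _ <= X]big_nat_cond; apply: ler_sum => k /andP[kr _].
  rewrite [Dd * _]mulrC ler_wpM2l ?G_ge0 //.
  rewrite sum_c ?D_eq; last by lia.
  by apply: psum_mono; lia.
- have -> : MM%:R = \sum_(1 <= n < MM.+1) \sum_(x < N) LL MM (fun s => (hb x n s)%:R) :> R.
    by rewrite (eq_bigr (fun _ => 1)) ?sumr_const_nat ?subn1 // => n _; rewrite sum_hx.
  apply: (@le_trans _ _ (\sum_(1 <= n < MM.+1) \sum_(x < N) Tsum x n)); last first.
    rewrite big_nat_cond [in X in _ <= X]big_nat_cond; apply: ler_sum => n /andP[nr _].
    apply: ler_sum => x _; rewrite -LT; last by lia.
    apply: L_mono => s; rewrite sum_F_hb orbN /=.
    case hh: (has _ _); last by rewrite ler0n.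
    by rewrite (has_F_hb_le hh).
  rewrite chain HG mulr_sumr; apply: ler_sum => x _; rewrite mulr_sumr.
  rewrite big_nat_cond [in X in _ <= X]big_nat_cond; apply: ler_sum => k /andP[kr _].
  rewrite [Dd * _]mulrC ler_wpM2l ?G_ge0 //.
  rewrite sum_c ?D_eq; last by rewrite /MM; lia.
  by apply: psum_mono; rewrite /MM; lia.
Qed.

End Pure.

Local Open Scope classical_set_scope.

Section Meas.
Variables (d : measure_display) (T : measurableType d) (R : realType) (P : probability T R) (X : nat -> T -> int).
Hypotheses (hX : int_rvs X) (hind : mutually_independent P X) (hid : identically_distributed P X).

Definition pr (A : set T) : R := fine (P A).

Definition enc (n : nat) : int := if odd n then Negz n./2 else Posz n./2.

Lemma enc_inj : injective enc.
Proof.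
move=> a b; rewrite /enc.
case oa: (odd a); case ob: (odd b) => // -[] e;
by rewrite -(odd_double_half a) -(odd_double_half b) oa ob e.
Qed.

Lemma enc_surj z : exists n, enc n = z.
Proof.
case: z => m.
  by exists m.*2; rewrite /enc odd_double doubleK.
exists m.*2.+1; rewrite /enc /= odd_double /=.
by rewrite uphalf_double.
Qed.

Definition Fs j (A : pred int) (B : set T) n :=
  (if A (enc n) then [set w | X j w = enc n] else set0) `&` B.

Lemma Fs_meas j (A : pred int) B n : measurable B -> measurable (Fs j A B n).
Proof. by move=> mB; apply: measurableI => //; case: (A (enc n)). Qed.

Lemma Fs_cup j (A : pred int) B : [set w | A (X j w)] `&` B = \bigcup_n Fs j A B n.
Proof.
apply/seteqP; split => w /=.
  move=> [Aw Bw]; have [n en] := enc_surj (X j w).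
  by exists n => //; rewrite /Fs en Aw.
move=> [n _]; rewrite /Fs; case An: (A (enc n)) => -[//= e Bw].
by split => //; rewrite e.
Qed.

Lemma Fs_triv j (A : pred int) B : trivIset setT (Fs j A B).
Proof.
move=> n m _ _ [w []]; rewrite /Fs.
case: (A (enc n)) => -[] //= en _; case: (A (enc m)) => -[] //= em _.
by apply: enc_inj; rewrite -en -em.
Qed.

Lemma decomp j (A : pred int) B : measurable B ->
  P ([set w | A (X j w)] `&` B) = (\sum_(n <oo) P (Fs j A B n))%E.
Proof.
move=> mB; rewrite Fs_cup measure_bigcup //.
- by apply: eq_eseriesl => n; rewrite in_setT.
- by move=> n _; apply: Fs_meas.
- exact: Fs_triv.
Qed.


Lemma Pfin (S : set T) : measurable S -> P S = (pr S)%:E.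
Proof.
move=> mS; rewrite /pr fineK // ge0_fin_numE ?measure_ge0 //.
exact: (le_lt_trans (probability_le1 _ mS) (ltry _)).
Qed.

Lemma ident j (A : pred int) : P [set w | A (X j w)] = P [set w | A (X 0 w)].
Proof.
have E k : [set w | A (X k w)] = [set w | A (X k w)] `&` setT by rewrite setIT.
rewrite (E j) (E 0%N) !decomp //; apply: eq_eseriesr => n _.
by rewrite /Fs; case: (A (enc n)) => //; rewrite !setIT hid.
Qed.

Lemma meas_pred j (A : pred int) : measurable [set w | A (X j w)].
Proof.
rewrite -[X in measurable X]setIT Fs_cup; apply: bigcupT_measurable => n.
exact: Fs_meas.
Qed.

Lemma meas_bigcap (I : seq nat) (F : nat -> set T) :
  (forall i, measurable (F i)) -> measurable (\bigcap_(i in [set` I]) F i).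
Proof. by move=> mF; apply: fin_bigcap_measurable => //; exact: finite_seq. Qed.

Lemma indep_mixed (J K : seq nat) (A : nat -> pred int) (k : nat -> int) :
  uniq (J ++ K) ->
  P ((\bigcap_(i in [set` J]) [set w | A i (X i w)]) `&`
     (\bigcap_(i in [set` K]) [set w | X i w = k i])) =
  ((\prod_(i <- J) pr [set w | A i (X i w)]) *
   (\prod_(i <- K) pr [set w | X i w = k i]))%:E.
Proof.
elim: J K k => [|j J IH] K k /=.
  move=> uK; rewrite set_nil bigcap_set0 setTI big_nil mul1r hind // -prodEFin.
  by apply: eq_bigr => i _; rewrite Pfin.
move=> /andP[jJK uJK].
set B := (\bigcap_(i in [set` J]) [set w | A i (X i w)]) `&`
     (\bigcap_(i in [set` K]) [set w | X i w = k i]).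
have mB : measurable B by apply: measurableI; apply: meas_bigcap => i; [exact: meas_pred | exact: hX].
have -> : \bigcap_(i in [set` j :: J]) [set w | A i (X i w)] =
    [set w | A j (X j w)] `&` \bigcap_(i in [set` J]) [set w | A i (X i w)].
  by rewrite !bigcap_seq big_cons.
rewrite -setIA -/B decomp //.
set C := (\prod_(i <- J) pr [set w | A i (X i w)]) * (\prod_(i <- K) pr [set w | X i w = k i]).
have term n : P (Fs j (A j) B n) = (C%:E * P (Fs j (A j) setT n))%E.
  rewrite /Fs; case An: (A j (enc n)); last by rewrite !set0I measure0 mule0.
  set k' := fun i => if i == j then enc n else k i.
  have uJK' : uniq (J ++ j :: K).
    by rewrite (perm_uniq (introT permPl (perm_catCA J [:: j] K))) /= jJK.
  have := IH (j :: K) k' uJK'.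
  have eK : \bigcap_(i in [set` j :: K]) [set w | X i w = k' i] =
      [set w | X j w = enc n] `&` \bigcap_(i in [set` K]) [set w | X i w = k i].
    rewrite !bigcap_seq big_cons /k' eqxx; congr (_ `&` _).
    apply: eq_big_seq => i iK; have -> // : (i == j) = false.
    by apply/negbTE; apply: contraNneq jJK => <-; rewrite mem_cat iK orbT.
  have pK : \prod_(i <- j :: K) pr [set w | X i w = k' i] =
      pr [set w | X j w = enc n] * \prod_(i <- K) pr [set w | X i w = k i].
    rewrite big_cons /k' eqxx; congr (_ * _).
    apply: eq_big_seq => i iK; have -> // : (i == j) = false.
    by apply/negbTE; apply: contraNneq jJK => <-; rewrite mem_cat iK orbT.
  rewrite eK pK => IHe.
  rewrite setIT (Pfin (hX _ _)) /B setICA IHe -EFinM /C; congr (_%:E); ring.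
rewrite (eq_eseriesr (fun n _ => term n)) nneseriesZl; last by move=> n _; apply: measure_ge0.
rewrite -decomp // setIT (Pfin (meas_pred _ _)) -EFinM big_cons /C; congr (_%:E); ring.
Qed.


Variable N : nat.
Hypothesis hN : (1 < N)%N.

Definition res i w : nat := absz ((X i w) %% N%:Z)%Z.
Definition resA (r : nat) : pred int := fun z => absz (z %% N%:Z)%Z == r.
Definition q r := pr [set w | resA r (X 0 w)].
Definition rs m n w := [seq res i w | i <- iota m n].
Definition E (I : seq nat) (rho : nat -> nat) :=
  \bigcap_(i in [set` I]) [set w | resA (rho i) (X i w)].

Lemma res_lt i w : (res i w < N)%N.
Proof.
rewrite /res -ltz_nat gez0_abs ?modz_ge0 ?ltz_pmod //; lia.
Qed.

Lemma cylinder I rho : uniq I -> P (E I rho) = (\prod_(i <- I) q (rho i))%:E.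
Proof.
move=> uI.
have := @indep_mixed I [::] (fun i => resA (rho i)) (fun _ => 0); rewrite cats0 => /(_ uI).
rewrite set_nil bigcap_set0 setIT big_nil mulr1 /E => ->; congr (_%:E).
by apply: eq_bigr => i _; rewrite /pr /q ident.
Qed.

Lemma meas_E I rho : measurable (E I rho).
Proof. by apply: meas_bigcap => i; apply: meas_pred. Qed.

Lemma step_cup m n (g : pred (seq nat)) B :
  B `&` [set w | g (rs m n.+1 w)] =
  \bigcup_(r < N) (B `&` [set w | resA r (X m w)] `&` [set w | g (r :: rs m.+1 n w)]).
Proof.
apply/seteqP; split => w /=.
  move=> [Bw gw]; exists (res m w); first exact: res_lt.
  by split => //; split => //; rewrite /resA /=.
move=> [r _ [[Bw /eqP e] gw]]; split => //.
by rewrite /rs /= -/(rs m.+1 n w); move: e; rewrite -/(res m w) => ->.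
Qed.

Lemma meas_g n : forall m (g : pred (seq nat)), measurable [set w | g (rs m n w)].
Proof.
elim: n => [|n IH] m g.
  case: (g [::]).
    by rewrite (_ : [set _ : T | is_true true] = setT) //; apply/seteqP; split.
  by rewrite (_ : [set _ : T | is_true false] = set0) //; apply/seteqP; split.
rewrite -[X in measurable X]setTI step_cup bigcup_mkord.
apply: bigsetU_measurable => r _; apply: measurableI; last exact: (IH m.+1 (fun s => g (nat_of_ord r :: s))).
by apply: measurableI => //; apply: meas_pred.
Qed.

Lemma law n : forall m (I : seq nat) (rho : nat -> nat) (g : pred (seq nat)),
  uniq I -> all (fun i => (i < m)%N) I ->
  P (E I rho `&` [set w | g (rs m n w)]) =
  ((\prod_(i <- I) q (rho i)) * LL N q n (fun s => (g s)%:R))%:E.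
Proof.
elim: n => [|n IH] m I rho g uI aI.
  rewrite /=; case: (g [::]).
    by rewrite (_ : [set _ : T | is_true true] = setT) ?setIT ?cylinder ?mulr1 //; apply/seteqP; split.
  rewrite (_ : [set _ : T | is_true false] = set0) ?setI0 ?measure0 ?mulr0 //.
  by apply/funext => w /=; apply/propext; split.
rewrite (step_cup m n g (E I rho)) bigcup_mkord (measure_semi_additive_ord P); first last.
- apply: bigsetU_measurable => r _; apply: measurableI; last exact: (meas_g n m.+1 (fun s => g (nat_of_ord r :: s))).
  by apply: measurableI; [apply: meas_E | apply: meas_pred].
- move=> a b _ _ [w [[[_ /eqP ea] _] [[_ /eqP eb] _]]].
  by apply: val_inj; rewrite /= -ea -eb.
- move=> r; apply: measurableI; last exact: (meas_g n m.+1 (fun s => g (nat_of_ord r :: s))).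
  by apply: measurableI; [apply: meas_E | apply: meas_pred].
have mI : m \notin I by apply/negP => /(allP aI); rewrite ltnn.
have term (r : 'I_N) : P (E I rho `&` [set w | resA r (X m w)] `&` [set w | g (nat_of_ord r :: rs m.+1 n w)]) =
    ((q r * \prod_(i <- I) q (rho i)) * LL N q n (fun s => (g (nat_of_ord r :: s))%:R))%:E.
  set rho' := fun i => if i == m then nat_of_ord r else rho i.
  have eE : E (m :: I) rho' = [set w | resA r (X m w)] `&` E I rho.
    rewrite /E !bigcap_seq big_cons /rho' eqxx; congr (_ `&` _).
    apply: eq_big_seq => i iI; have -> // : (i == m) = false.
    by apply/negbTE; apply: contraNneq mI => <-.
  have pE : \prod_(i <- m :: I) q (rho' i) = q r * \prod_(i <- I) q (rho i).
    rewrite big_cons /rho' eqxx; congr (_ * _).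
    apply: eq_big_seq => i iI; have -> // : (i == m) = false.
    by apply/negbTE; apply: contraNneq mI => <-.
  rewrite -pE -(IH m.+1 (m :: I) rho' (fun s => g (nat_of_ord r :: s))) /=; last first.
  - rewrite ltnSn /=; apply/allP => i /(allP aI) /= im; lia.
  - by rewrite mI.
  by rewrite eE (setIC [set w | resA r (X m w)]).
rewrite (eq_bigr _ (fun r _ => term r)) sumEFin /=; congr (_%:E).
rewrite mulr_sumr; apply: eq_bigr => r _; ring.
Qed.


Lemma law0 n (g : pred (seq nat)) :
  P [set w | g (rs 0 n w)] = (LL N q n (fun s => (g s)%:R))%:E.
Proof.
have := @law n 0%N [::] (fun _ => 0%N) g isT isT.
by rewrite /E set_nil bigcap_set0 setTI big_nil mul1r.
Qed.

Lemma q_ge0 r : 0 <= q r.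
Proof. by apply: fine_ge0; apply: measure_ge0. Qed.

Lemma q_sum : \sum_(r < N) q r = 1.
Proof.
have := law0 1 (fun _ => true).
rewrite (_ : [set w | is_true true] = setT); last by apply/seteqP; split.
rewrite (probability_setT P); case=> ->; rewrite /=.
by apply: eq_bigr => r _; rewrite mulr1.
Qed.

Lemma sum_res n w : (N%:Z %| (sumn [seq res i w | i <- iota 0 n])%:Z - partial_sum X n w)%Z.
Proof.
elim: n => [|n IH]; first by rewrite /partial_sum big_ord0 subr0 dvdz0.
rewrite /partial_sum big_ord_recr -/(partial_sum X n w).
rewrite (_ : iota 0 n.+1 = iota 0 n ++ [:: n]); last by rewrite -addn1 iotaD.
rewrite map_cat sumn_cat /= addn0.
have -> : (sumn [seq res i w | i <- iota 0 n] + res n w)%N%:Z - (partial_sum X n w + X n w) =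
   ((sumn [seq res i w | i <- iota 0 n])%:Z - partial_sum X n w) + ((res n w)%:Z - X n w).
  rewrite PoszD; ring.
rewrite (rpredDl _ IH) /res gez0_abs ?modz_ge0 //; last by lia.
have -> : (X n w %% N%:Z)%Z - X n w = - ((X n w %/ N%:Z)%Z * N%:Z).
  by rewrite {2}(divz_eq (X n w) N%:Z); ring.
by rewrite rpredN dvdz_mull // dvdzz.
Qed.

Lemma hb_link x n M' w : (n <= M')%N ->
  hb N x n (rs 0 M' w) = (N%:Z %| x%:Z + partial_sum X n w - n%:Z)%Z.
Proof.
move=> nM; rewrite /hb /rs -map_take take_iota (minn_idPl nM).
have -> : x%:Z + (sumn [seq res i w | i <- iota 0 n])%:Z - n%:Z =
   (x%:Z + partial_sum X n w - n%:Z) + ((sumn [seq res i w | i <- iota 0 n])%:Z - partial_sum X n w).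
  ring.
by rewrite (rpredDr _ (sum_res n w)).
Qed.

Lemma hit_eq x : hit_event X N x = [set w | hitb N x (rs 0 (MM N) w)].
Proof.
have modE n w : (((x%:Z + partial_sum X n w) %% N%:Z)%Z = ((n %% N)%N)%:Z) <->
    (N%:Z %| x%:Z + partial_sum X n w - n%:Z)%Z.
  rewrite -modz_nat -eqz_mod_dvd; split; [by move=> ->| by move/eqP].
apply/seteqP; split => w /=.
  move=> [n [/andP[n1 nN] /modE e]]; apply/hasP; exists n.
    by rewrite mem_iota; apply/andP; split => //; lia.
  by rewrite hb_link //; rewrite /MM; lia.
case/hasP => n; rewrite mem_iota => /andP[n1 nN].
rewrite hb_link; last by rewrite /MM; lia.
by move/modE => e; exists n; split => //; apply/andP; split => //; lia.
Qed.

Lemma p_link i : p_class P X N i = pp N q i.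
Proof.
rewrite /p_class /pp.
have -> : [set w | (N%:Z %| partial_sum X i w - i%:Z)%Z] = [set w | hb N 0 i (rs 0 i w)].
  by apply/seteqP; split => w /=; rewrite hb_link // add0r.
by rewrite law0.
Qed.

Lemma PR_link : PR_hit P X N = N%:R^-1 * Hsum N q.
Proof.
rewrite /PR_hit /Hsum; congr (_ * _); apply: eq_bigr => x _.
by rewrite hit_eq law0.
Qed.

End Meas.



Local Close Scope classical_set_scope.
Unset Implicit Arguments.

Theorem corollary3 (d : measure_display) (T : measurableType d) (R : realType)
  (P : probability T R) (X : nat -> T -> int)
  (hX : int_rvs X) (hind : mutually_independent P X)
  (hid : identically_distributed P X) (N : nat) (hN : (1 < N)%N) :
  let D := 1 + \sum_(1 <= i < N) p_class P X N i in
  D^-1 <= PR_hit P X N <= 2 / D.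
Proof.
cbv zeta; set D := 1 + \sum_(1 <= i < N) p_class P X N i.
have hD : D = Dd N (q P X N).
  by rewrite /D /Dd; congr (_ + _); apply: eq_bigr => i _; rewrite p_link.
have [h1 h2] := pure_main (q_ge0 P X N) (q_sum hX hind hid hN) hN.
rewrite (PR_link hX hind hid hN) hD.
set Dv := Dd N (q P X N) in h1 h2 *; set Hv := Hsum N (q P X N) in h1 h2 *.
have N0 : 0 < N%:R :> R by rewrite ltr0n; lia.
have D1 : 1 <= Dv.
  rewrite /Dv /Dd lerDl; apply: sumr_ge0 => i _; exact: (p_ge0 (q_ge0 P X N) (q_sum hX hind hid hN)).
have D0 : 0 < Dv by apply: lt_le_trans D1.
apply/andP; split.
  by rewrite ler_pdivlMl // ler_pdivrMr // mulrC.
rewrite ler_pdivrMl // mulrA ler_pdivlMr // mulrC.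
by apply: (le_trans h2); rewrite /MM natrD mulr_natr mulr2n.
Qed.
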